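(* Let $\mathcal{C}\subseteq[1,k]$ be a minimal core. Then there exist words $v_1,\dots,v_m\in\Sigma^*$ and words $u_1,\dots,u_m$, with $u_j$ $v_j$-minimal for each $j$, such that $\mathcal{C}\subseteq\mathrm{supp}(u_1)\cup\dots\cup\mathrm{supp}(u_m)$; that is, there is a family of minimal sections covering $\mathcal{C}$.
   Context: Let $\mathcal{A}=\langle Q,\Sigma,\delta\rangle$ be a synchronizing automaton with $n$ states $q_1,\dots,q_n$. Each word acts linearly on $\mathbb{C}Q$ by $q\mapsto q\cdot u$, preserving $w^\perp=\{x:\langle x,q_1+\dots+q_n\rangle=0\}$; let $\rho:\Sigma^*\to\mathbb{M}_{n-1}(\mathbb{C})$ be the induced representation and $\mathcal{R}$ the $\mathbb{C}$-algebra generated by $\rho(\Sigma^* )$. Write $\mathcal{R}/\mathrm{Rad}(\mathcal{R})\cong\prod_{i=1}^k\mathbb{M}_{n_i}(\mathbb{C})$ (Jacobson radical, Wedderburn–Artin) and let $\theta_i:\Sigma^*\to\mathbb{M}_{n_i}(\mathbb{C})$ be $\rho$ followed by the quotient map and the $i$-th projection; $0_i$ is the zero matrix. The support of a word $z$ is $\mathrm{supp}(z)=\{i:\theta_i(z)\neq0_i\}$. For $v\in\Sigma^*$, a word $u\in\Sigma^*v\Sigma^*$ is $v$-minimal, and $\mathrm{supp}(u)$ is a minimal section, if $\mathrm{supp}(u)\neq\emptyset$ and there is no $z\in\Sigma^*v\Sigma^*$ with $\emptyset\neq\mathrm{supp}(z)\subsetneq\mathrm{supp}(u)$. A subset $T\subseteq[1,k]$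 is a core if every word $x$ with $\theta_i(x)=0_i$ for all $i\in T$ satisfies $\theta_i(x)=0_i$ for all $i\in[1,k]$; a minimal core is a core minimal with respect to inclusion. *)

(* Defs.v *)
(* The complex field C is modelled by algC (MathComp's
   algebraically closed field of characteristic 0). *)
From HB Require Import structures.
From mathcomp Require Import all_boot all_order all_algebra.
From mathcomp Require Import algC.
Set Implicit Arguments. Unset Strict Implicit. Unset Printing Implicit Defensive.
Import Order.TTheory GRing.Theory Num.Theory.
Local Open Scope ring_scope.

(* An automaton with states 'I_n.+1 (so the paper's "n" is n.+1 here and
   the dimension of w^perp is n), alphabet Sigma, transition delta a q = q.a. *)

Definition act (Sigma : finType) (n : nat) (delta : Sigma -> 'I_n.+1 -> 'I_n.+1)
  (q : 'I_n.+1) (u : seq Sigma) : 'I_n.+1 :=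
  foldl (fun q a => delta a q) q u.

Definition synchronizing (Sigma : finType) (n : nat)
  (delta : Sigma -> 'I_n.+1 -> 'I_n.+1) : Prop :=
  exists w : seq Sigma, forall q q' : 'I_n.+1, act delta q w = act delta q' w.

(* The representation rho on w^perp, written in the basis
   f_i = q_i - q_last (i < n) of w^perp, acting on row vectors:
   f_i . u = q_{i.u} - q_{last.u} = f_{i.u} - f_{last.u}, with f_last := 0. *)
Definition rho (Sigma : finType) (n : nat) (delta : Sigma -> 'I_n.+1 -> 'I_n.+1)
  (u : seq Sigma) : 'M[algC]_n :=
  \matrix_(i < n, j < n)
     (((j : nat) == (act delta (widen_ord (leqnSn n) i) u : nat))%:R
      - ((j : nat) == (act delta ord_max u : nat))%:R).

(* The C-algebra generated by rho(Sigma^* ): since rho(Sigma^* ) is a monoid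
   containing the identity, this is the C-linear span of rho(Sigma^* ). *)
Definition in_alg (Sigma : finType) (n : nat) (delta : Sigma -> 'I_n.+1 -> 'I_n.+1)
  (A : 'M[algC]_n) : Prop :=
  exists (s : seq (algC * seq Sigma)),
    A = \sum_(p <- s) p.1 *: rho delta p.2.

Definition in_rad (Sigma : finType) (n : nat) (delta : Sigma -> 'I_n.+1 -> 'I_n.+1)
  (A : 'M[algC]_n) : Prop :=
  in_alg delta A /\
  forall r : 'M[algC]_n, in_alg delta r -> (1%:M - r *m A) \in unitmx.

(* Phi = (Phi_i)_i : R -> prod_i M_{d i}(C) is a surjective C-algebra morphism
   with kernel Rad(R), i.e. it induces R/Rad(R) ~ prod_i M_{d i}(C). *)
Definition wedderburn_data (Sigma : finType) (n : nat)
  (delta : Sigma -> 'I_n.+1 -> 'I_n.+1) (k : nat) (d : 'I_k -> nat)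
  (Phi : forall i : 'I_k, 'M[algC]_n -> 'M[algC]_(d i)) : Prop :=
  [/\ forall i, (0 < d i)%N,
      forall i, Phi i 1%:M = 1%:M,
      (forall i (c : algC) A B, in_alg delta A -> in_alg delta B ->
         Phi i (c *: A + B) = c *: Phi i A + Phi i B) /\
      (forall i A B, in_alg delta A -> in_alg delta B ->
         Phi i (A *m B) = Phi i A *m Phi i B),
      (forall Bs : forall i : 'I_k, 'M[algC]_(d i),
         exists2 A, in_alg delta A & forall i, Phi i A = Bs i)
    & (forall A, in_alg delta A -> ((forall i, Phi i A = 0) <-> in_rad delta A))].

Definition theta (Sigma : finType) (n : nat) (delta : Sigma -> 'I_n.+1 -> 'I_n.+1)
  (k : nat) (d : 'I_k -> nat)
  (Phi : forall i : 'I_k, 'M[algC]_n -> 'M[algC]_(d i))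
  (i : 'I_k) (u : seq Sigma) : 'M[algC]_(d i) :=
  Phi i (rho delta u).

Section Sections.
Variables (Sigma : finType) (k : nat) (d : 'I_k -> nat).
Variable th : forall i : 'I_k, seq Sigma -> 'M[algC]_(d i).

Definition supp (z : seq Sigma) : {set 'I_k} := [set i | th i z != 0].

Definition has_factor (v u : seq Sigma) : Prop :=
  exists x y : seq Sigma, u = x ++ v ++ y.

Definition v_minimal (v u : seq Sigma) : Prop :=
  [/\ has_factor v u, supp u != set0 &
      ~ exists z, [/\ has_factor v z, supp z != set0 & supp z \proper supp u]].

Definition is_core (T : {set 'I_k}) : Prop :=
  forall x : seq Sigma, (forall i, i \in T -> th i x = 0) -> forall i, th i x = 0.

Definition minimal_core (C : {set 'I_k}) : Prop :=
  is_core C /\ forall T : {set 'I_k}, T \proper C -> ~ is_core T.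
End Sections.

(* Main.v *)
Require Import Defs.
From HB Require Import structures.
From mathcomp Require Import all_boot all_order all_algebra.
From mathcomp Require Import algC.
From Stdlib Require Import Classical.
Import Order.TTheory GRing.Theory Num.Theory.
Local Open Scope ring_scope.

Section Aux.
Variables (Sigma : finType) (k : nat) (d : 'I_k -> nat).
Variable th : forall i : 'I_k, seq Sigma -> 'M[algC]_(d i).

Lemma exists_min (x : seq Sigma) : forall m z, (#|supp th z| <= m)%N ->
  has_factor x z -> supp th z != set0 ->
  exists u, v_minimal th x u /\ supp th u \subset supp th z.
Proof.
elim=> [|m IH] z hc hf hn.
  by move: hn; rewrite -cards_eq0 -leqn0 hc.
case: (classic (exists z', [/\ has_factor x z', supp th z' != set0
   & supp th z' \proper supp th z])) => [[z' [h1 h2 h3]]|hno].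
  have hc' : (#|supp th z'| <= m)%N.
    by rewrite -ltnS; exact: leq_trans (proper_card h3) hc.
  have [u [hu hs]] := IH z' hc' h1 h2.
  exists u; split => //; apply: subset_trans hs (proper_sub h3).
by exists z; split => //; split.
Qed.

Lemma cover_seq (Q : seq Sigma * seq Sigma -> Prop) (r : seq 'I_k) :
  (forall i, i \in r -> exists p, Q p /\ i \in supp th p.2) ->
  exists s : seq (seq Sigma * seq Sigma), (forall p, p \in s -> Q p) /\
    forall i, i \in r -> i \in \bigcup_(p <- s) supp th p.2.
Proof.
elim: r => [|a r IH] h.
  by exists [::]; split.
have [s [hs1 hs2]] : exists s : seq (seq Sigma * seq Sigma), (forall p, p \in s -> Q p) /\ forall i, i \in r -> i \in \bigcup_(p <- s) supp th p.2.
  by apply: IH => i hi; apply: h; rewrite inE hi orbT.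
have [p [hp1 hp2]] := h a (mem_head _ _).
exists (p :: s); split.
  by move=> q; rewrite inE => /orP [/eqP -> //|]; apply: hs1.
move=> i; rewrite inE big_cons in_setU => /orP [/eqP -> |hi].
  by rewrite hp2.
by rewrite hs2 ?orbT.
Qed.

Lemma main_aux (C : {set 'I_k}) : minimal_core th C ->
  exists s : seq (seq Sigma * seq Sigma),
    (forall p, p \in s -> v_minimal th p.1 p.2) /\
    C \subset \bigcup_(p <- s) supp th p.2.
Proof.
move=> [coreC minC].
have key : forall i, i \in enum C -> exists p : seq Sigma * seq Sigma,
    v_minimal th p.1 p.2 /\ i \in supp th p.2.
  move=> i; rewrite mem_enum => iC.
  have nc := minC (C :\ i) (properD1 iC).
  have [x hx] : exists x, ~ ((forall j, j \in C :\ i -> th j x = 0) ->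
       forall j, th j x = 0).
    by apply: not_all_ex_not.
  have [hx1 hx2] : (forall j, j \in C :\ i -> th j x = 0) /\
      ~ (forall j, th j x = 0) by tauto.
  have hxn : supp th x != set0.
    apply/negP => /eqP h0; apply: hx2 => j; apply/eqP.
    have : j \notin supp th x by rewrite h0 in_set0.
    by rewrite inE negbK.
  have hfx : has_factor x x by exists [::], [::]; rewrite cats0.
  have [u [hu hs]] := @exists_min x _ x (leqnn _) hfx hxn.
  exists (x, u); split => //=.
  apply: contraT; rewrite inE negbK => /eqP hiu.
  case: hu => _ hun _; suff: supp th u == set0 by rewrite (negbTE hun).
  apply/eqP/setP => j; rewrite inE in_set0; apply/negbTE; rewrite negbK; apply/eqP; move: j.
  apply: coreC => j' j'C; case: (eqVneq j' i) => [->//|ne].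
  apply/eqP; apply: contraT => hj.
  have : j' \in supp th x by apply: (subsetP hs); rewrite inE.
  by rewrite inE hx1 ?eqxx // in_setD1 ne j'C.
have [s [h1 h2]] := @cover_seq (fun p => v_minimal th p.1 p.2) _ key.
exists s; split => //; apply/subsetP => i iC; apply: h2; by rewrite mem_enum.
Qed.
End Aux.

Theorem mainTheorem8 (Sigma : finType) (n : nat)
  (delta : Sigma -> 'I_n.+1 -> 'I_n.+1)
  (k : nat) (d : 'I_k -> nat)
  (Phi : forall i : 'I_k, 'M[algC]_n -> 'M[algC]_(d i))
  (C : {set 'I_k}) :
  synchronizing delta ->
  wedderburn_data delta Phi ->
  minimal_core (theta delta Phi) C ->
  exists s : seq (seq Sigma * seq Sigma),
    (forall p, p \in s -> v_minimal (theta delta Phi) p.1 p.2) /\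
    C \subset \bigcup_(p <- s) supp (theta delta Phi) p.2.
Proof. by move=> _ _; apply: main_aux. Qed.
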